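(* For every $\varepsilon>0$, the set $K_{2.33529\dots+\varepsilon}$ is uncountable, where $2.33529\dots$ is the unique real root of $x^5-x^4-2x^3-2x^2-x-1$ and $K_\alpha$ denotes the set of all closed permutation classes $X$ for which there exists $n_0$ such that $|X\cap S_n|<\alpha^n$ for all $n>n_0$.
   Context: $S_n$ is the set of permutations of $[n]$, $S=\bigcup_n S_n$; $\pi\prec\rho$ means $\rho$ (as a sequence) has a subsequence order-isomorphic to $\pi$; a closed permutation class is a set $X\subset S$ such that $\pi\prec\sigma\in X$ implies $\pi\in X$. *)

(* Defs.v *)
From mathcomp Require Import all_boot all_order all_algebra all_fingroup.
From mathcomp Require Import reals.
Set Implicit Arguments. Unset Strict Implicit. Unset Printing Implicit Defensive.
Import Order.TTheory GRing.Theory Num.Theory.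

Definition Perm := {n : nat & 'S_n}.

Definition contains (k n : nat) (p : 'S_k) (s : 'S_n) : Prop :=
  exists f : 'I_k -> 'I_n,
    (forall i j : 'I_k, (i < j)%N -> (f i < f j)%N) /\
    (forall i j : 'I_k, (p i < p j)%N = (s (f i) < s (f j))%N).

Definition PermSet := Perm -> bool.

Definition closed_class (X : PermSet) : Prop :=
  forall (k n : nat) (p : 'S_k) (s : 'S_n),
    contains p s -> X (existT _ n s) -> X (existT _ k p).

Definition level_count (X : PermSet) (n : nat) : nat :=
  #|[set s : 'S_n | X (existT _ n s)]|.

Definition K_class (R : realType) (alpha : R) (X : PermSet) : Prop :=
  closed_class X /\
  exists n0 : nat, forall n : nat, (n0 < n)%N ->
    ((level_count X n)%:R < alpha ^+ n)%R.

Definition countable_family (F : PermSet -> Prop) : Prop :=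
  exists e : nat -> PermSet, forall X, F X -> exists m : nat, e m = X.

Definition uncountable_family (F : PermSet -> Prop) : Prop :=
  ~ countable_family F.

(* Main.v *)
Require Import Defs.
From mathcomp Require Import all_boot all_order all_algebra all_fingroup.
From mathcomp Require Import reals.
Import Order.TTheory GRing.Theory Num.Theory.
From mathcomp Require Import boolp.
From mathcomp Require Import zify.
From Stdlib Require Import Lia.
From mathcomp Require Import ring lra.
Import Order.TTheory GRing.Theory Num.Theory.
Set Implicit Arguments. Unset Strict Implicit. Unset Printing Implicit Defensive.

Definition gv (M x : nat) : nat :=
  if x == 0 then 17 else if x == M.+1 then 4 * M + 1 else 4 * x + 14 * odd x.

Lemma gv_cases M x : x <= M.+1 ->
  [\/ x = 0 /\ gv M x = 17,
      x = M.+1 /\ gv M x = 4 * M + 1,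
      (exists q, [/\ 1 <= x <= M, x = 2 * q & gv M x = 4 * x]) |
      (exists q, [/\ 1 <= x <= M, x = 2 * q + 1 & gv M x = 4 * x + 14])].
Proof.
move=> hx; rewrite /gv.
case: eqP => [->|x0]; first by apply: Or41.
case: eqP => [->|xM]; first by apply: Or42.
have e := odd_double_half x.
case ox: (odd x) e => /= e.
  apply: Or44; exists x./2; split; lia.
apply: Or43; exists x./2; split; lia.
Qed.

Ltac gvc M x :=
  let h := fresh "h" in
  assert (h : x <= M.+1) by lia;
  case: (gv_cases h) => [[? ?]|[? ?]|[? [? ? ?]]|[? [? ? ?]]]; clear h.

Lemma gv_inj M x y : 5 <= M -> x <= M.+1 -> y <= M.+1 -> gv M x = gv M y -> x = y.
Proof. move=> hM hx hy. gvc M x; gvc M y; lia. Qed.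

Lemma gv_far M x y : 5 <= M -> x < y -> y <= M.+1 -> gv M y < gv M x -> y <= x + 4.
Proof. move=> hM hx hy. gvc M x; gvc M y; lia. Qed.

Definition Rrel (x y : nat) : bool := odd x && ((y == x.+1) || (y == x + 3)).

Lemma gv_mid M x y : 1 <= x -> x < y -> y <= M -> (gv M y < gv M x) = Rrel x y.
Proof.
move=> h1 hxy hy; rewrite /Rrel.
gvc M x; gvc M y; try (exfalso; lia); subst; rewrite ?oddD ?oddM /=;
 apply/idP/idP => H; try (case/orP: H => /eqP H); lia.
Qed.

Definition rk (L : nat) (g : nat -> nat) (i : nat) : nat :=
  count (fun j => g j < g i) (iota 0 L).

Lemma rk_lt L g i : i < L -> rk L g i < L.
Proof.
move=> hi; rewrite /rk -[X in _ < X](size_iota 0 L) -(count_predC (fun j => g j < g i)).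
rewrite -[X in X < _]addn0 ltn_add2l -has_count; apply/hasP; exists i => /=.
  by rewrite mem_iota.
by rewrite ltnn.
Qed.

Lemma rk_mono L g i j : i < L -> g i < g j -> rk L g i < rk L g j.
Proof.
move=> hi hij; rewrite /rk.
have h1 : count (predU (fun k => g k < g i) (pred1 i)) (iota 0 L) <=
          count (fun k => g k < g j) (iota 0 L).
  apply: sub_count => k /= /orP [h|/eqP ->] //; exact: ltn_trans h hij.
have h2 := count_predUI (fun k => g k < g i) (pred1 i) (iota 0 L).
have h3 : count (predI (fun k => g k < g i) (pred1 i)) (iota 0 L) = 0.
  apply/eqP; rewrite -leqn0 leqNgt -has_count; apply/hasP => -[k _ /= /andP [h /eqP e]].
  by move: h; rewrite e ltnn.
have h4 : @count nat (pred1 i) (iota 0 L) = 1.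
  by rewrite count_uniq_mem ?iota_uniq // mem_iota /=; rewrite hi.
lia.
Qed.

Lemma rk_ltE L g i j : (forall x y, x < L -> y < L -> g x = g y -> x = y) ->
  i < L -> j < L -> (rk L g i < rk L g j) = (g i < g j).
Proof.
move=> ginj hi hj; apply/idP/idP => h; last exact: rk_mono.
case: (ltngtP (g i) (g j)) => // h'.
  by have := rk_mono hj h'; lia.
by move: (ginj _ _ hi hj h') h => ->; rewrite ltnn.
Qed.

Definition Mt (t : nat) : nat := 2 * t + 8.
Definition Lt (t : nat) : nat := (Mt t).+2.

Lemma gvinj_t t : forall x y, x < Lt t -> y < Lt t -> gv (Mt t) x = gv (Mt t) y -> x = y.
Proof. move=> x y hx hy e; rewrite /Lt /Mt in hx hy; apply: (gv_inj _ _ _ e); rewrite /Mt; lia. Qed.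

Definition uf t (i : 'I_(Lt t)) : 'I_(Lt t) := Ordinal (rk_lt (gv (Mt t)) (ltn_ord i)).

Lemma uf_lt t (i j : 'I_(Lt t)) : (uf i < uf j) = (gv (Mt t) i < gv (Mt t) j).
Proof. by rewrite /= rk_ltE //; apply: gvinj_t. Qed.

Lemma uf_inj t : injective (@uf t).
Proof.
move=> i j e; apply/val_inj/(gvinj_t (ltn_ord i) (ltn_ord j)).
case: (ltngtP (gv (Mt t) i) (gv (Mt t) j)) => // h.
  by move: h; rewrite -uf_lt e ltnn.
by move: h; rewrite -uf_lt e ltnn.
Qed.

Definition u t : 'S_(Lt t) := perm (@uf_inj t).

Lemma u_lt t (i j : 'I_(Lt t)) : (u t i < u t j) = (gv (Mt t) i < gv (Mt t) j).
Proof. by rewrite !permE uf_lt. Qed.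

Definition nf k n (f : 'I_k -> 'I_n) (a : nat) : nat :=
  if (insub a : option 'I_k) is Some i then val (f i) else 0.

Lemma nfE k n (f : 'I_k -> 'I_n) (i : 'I_k) : nf f i = f i.
Proof. by rewrite /nf valK. Qed.

Definition sv n (s : 'S_n) := nf (fun i => s i).

Lemma svE n (s : 'S_n) (i : 'I_n) : sv s i = s i.
Proof. exact: nfE. Qed.

Lemma nf_lt k n (f : 'I_k -> 'I_n) a : a < k -> nf f a < n.
Proof. by move=> ha; rewrite /nf; case: insubP => [i _ _|/negP //]; apply: ltn_ord. Qed.

Lemma contains_refl n (s : 'S_n) : contains s s.
Proof. by exists id. Qed.

Lemma contains_trans k m n (p : 'S_k) (q : 'S_m) (s : 'S_n) :
  contains p q -> contains q s -> contains p s.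
Proof.
case=> f1 [i1 o1] [f2 [i2 o2]]; exists (f2 \o f1); split => i j /=.
  by move=> h; apply: i2; apply: i1.
by rewrite o1 o2.
Qed.

Lemma emb_nat k n (p : 'S_k) (s : 'S_n) : contains p s -> exists F : nat -> nat,
 [/\ forall a b, a < b -> b < k -> F a < F b,
     forall a, a < k -> F a < n &
     forall a b, a < k -> b < k -> (sv p a < sv p b) = (sv s (F a) < sv s (F b))].
Proof.
case=> f [finc ford]; exists (nf f); split.
- move=> a b hab hb; have ha : a < k by lia.
  by rewrite -[a]/(val (Ordinal ha)) -[b]/(val (Ordinal hb)) !nfE; apply: finc.
- exact: nf_lt.
- move=> a b ha hb.
  by rewrite -[a]/(val (Ordinal ha)) -[b]/(val (Ordinal hb)) !nfE !svE ford.
Qed.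

Lemma u_nat t x y : x < Lt t -> y < Lt t ->
  (sv (u t) x < sv (u t) y) = (gv (Mt t) x < gv (Mt t) y).
Proof.
move=> hx hy.
by rewrite -[x]/(val (Ordinal hx)) -[y]/(val (Ordinal hy)) !svE u_lt.
Qed.

Lemma F_ge (F : nat -> nat) N :
  (forall a b, a < b -> b <= N -> F a < F b) -> forall a, a <= N -> a <= F a.
Proof.
move=> Hi; elim=> [|a IH] ha //; have := Hi a a.+1 (ltnSn a) ha; have := IH (ltnW ha); lia.
Qed.

Lemma anti_nat M M' (F : nat -> nat) : 8 <= M -> 8 <= M' -> ~~ odd M -> ~~ odd M' ->
 (forall a b, a < b -> b <= M.+1 -> F a < F b) ->
 (forall a, a <= M.+1 -> F a <= M'.+1) ->
 (forall a b, a <= M.+1 -> b <= M.+1 -> (gv M a < gv M b) = (gv M' (F a) < gv M' (F b))) ->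
 M = M'.
Proof.
move=> hM hM' eM eM' Hi Hr Ho.
have HL : forall a b, a <= M.+1 -> b <= M.+1 -> gv M a < gv M b -> gv M' (F a) < gv M' (F b).
  by move=> a b ha hb h; rewrite -Ho.
have Hge := F_ge Hi.
have hMM : M <= M' by have := Hge M.+1 (leqnn _); have := Hr M.+1 (leqnn _); lia.
case: (ltngtP M M') => // hlt; last by lia.
have eM2 : M = 2 * M./2 by have := odd_double_half M; rewrite (negbTE eM) /=; lia.
have eM2' : M' = 2 * M'./2 by have := odd_double_half M'; rewrite (negbTE eM') /=; lia.
have hM2 : M.+2 <= M' by lia.
have hr : forall a, a <= M.+1 -> F a <= M'.+1 := Hr.
have hi : forall a, a < M.+1 -> F a < F a.+1 by move=> a ha; apply: Hi.
have Hinv : forall a b, a <= M.+1 -> b <= M.+1 -> gv M b < gv M a -> gv M' (F b) < gv M' (F a).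
  by move=> a b ha hb; apply: HL.
have B : [/\ F 0 = 0, F 1 = 1, F 2 = 2, F 3 = 3 & F 4 = 4].
  have h02 : gv M' (F 2) < gv M' (F 0) by apply: Hinv; try lia; gvc M 2; gvc M 0; lia.
  have h04 : gv M' (F 4) < gv M' (F 0) by apply: Hinv; try lia; gvc M 4; gvc M 0; lia.
  have h01 : gv M' (F 0) < gv M' (F 1) by apply: Hinv; try lia; gvc M 1; gvc M 0; lia.
  have := hi 0 ltac:(lia); have := hi 1 ltac:(lia); have := hi 2 ltac:(lia); have := hi 3 ltac:(lia).
  have := hr 4 ltac:(lia); have := hr 0 ltac:(lia); have := hr 2 ltac:(lia).
  move: (F 0) (F 1) (F 2) (F 3) (F 4) h02 h04 h01 => f0 f1 f2 f3 f4 h02 h04 h01 *.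
  have e0 : f0 = 0 by gvc M' f0; gvc M' f2; gvc M' f4; lia.
  subst f0.
  have g0 : gv M' 0 = 17 by [].
  gvc M' f1; gvc M' f2; gvc M' f4; split; lia.
case: B => B0 B1 B2 B3 B4.
have Hid : forall n a, a <= n -> a <= M -> F a = a.
  elim=> [|n IH] a han haM; first by move: han; rewrite leqn0 => /eqP ->.
  case: (leqP a n) => h; first by apply: IH.
  have ean : a = n.+1 by lia.
  case: (leqP a 4) => h4.
    by move: h4 ean; case: a {han h haM} => [|[|[|[|[|]]]]].
  have ea := odd_double_half a.
  rewrite -muln2 in ea.
  case oa: (odd a) ea => /= ea.
  - have hFa2 : F (a - 2) = a - 2 by apply: IH; lia.
    have hFa1 : F (a - 1) = a - 1 by apply: IH; lia.
    have hinv : gv M' (F a.+1) < gv M' (F (a - 2)).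
      apply: Hinv; try lia; gvc M a.+1; gvc M (a - 2); lia.
    rewrite hFa2 in hinv.
    have := Hi (a - 1) a ltac:(lia) ltac:(lia); have := hi a ltac:(lia); have := hr a.+1 ltac:(lia).
    rewrite hFa1 => *.
    gvc M' (F a.+1); gvc M' (a - 2); lia.
  - have hFa1 : F (a - 1) = a - 1 by apply: IH; lia.
    have hFa3 : F (a - 3) = a - 3 by apply: IH; lia.
    have hinv1 : gv M' (F a) < gv M' (F (a - 1)).
      apply: Hinv; try lia; gvc M a; gvc M (a - 1); lia.
    have hinv3 : gv M' (F a) < gv M' (F (a - 3)).
      apply: Hinv; try lia; gvc M a; gvc M (a - 3); lia.
    rewrite hFa1 in hinv1; rewrite hFa3 in hinv3.
    have := Hi (a - 1) a ltac:(lia) ltac:(lia); have := hi a ltac:(lia); have := hr a.+1 ltac:(lia).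
    rewrite hFa1 => *.
    gvc M' (F a); gvc M' (a - 1); gvc M' (a - 3); lia.
have hFM : F M = M by apply: (Hid M).
have hFM1 : F (M - 1) = M - 1 by apply: (Hid M); lia.
have hFM3 : F (M - 3) = M - 3 by apply: (Hid M); lia.
have hinv1 : gv M' (F M.+1) < gv M' (F (M - 1)).
  apply: Hinv; try lia; gvc M M.+1; gvc M (M - 1); lia.
have hinv3 : gv M' (F M.+1) < gv M' (F (M - 3)).
  apply: Hinv; try lia; gvc M M.+1; gvc M (M - 3); lia.
rewrite hFM1 in hinv1; rewrite hFM3 in hinv3.
have := hi M ltac:(lia); have := hr M.+1 ltac:(lia).
rewrite hFM => *.
gvc M' (F M.+1); gvc M' (M - 1); gvc M' (M - 3); lia.
Qed.


Definition tripS : seq (nat * nat * nat) :=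
  [:: (0, 0, 0); (0, 0, 1); (0, 0, 2); (0, 0, 3); (0, 0, 5); (0, 1, 0); (0, 2, 1); (0, 2, 3);
      (0, 2, 5); (0, 3, 0); (0, 5, 0); (1, 0, 0); (1, 0, 1); (1, 0, 2); (1, 0, 3); (1, 0, 5);
      (2, 1, 0); (2, 3, 0); (2, 5, 0); (3, 0, 0); (5, 0, 1); (5, 0, 3); (5, 0, 5)].
Definition trip3 (a b c : nat) : bool := (a, b, c) \in tripS.

Definition Rg (b : bool) (d : nat) : bool := b && ((d == 1) || (d == 3)).
Definition letterG (b : bool) (gs : seq nat) : nat :=
  Rg b (sumn (take 1 gs)) + 2 * Rg b (sumn (take 2 gs)) +
  4 * Rg b (sumn (take 3 gs)) + 8 * Rg b (sumn (take 4 gs)).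
Definition tripL (b : bool) (gs : seq nat) : bool :=
  trip3 (letterG b gs) (letterG (b (+) odd (nth 0 gs 0)) (drop 1 gs))
        (letterG (b (+) odd (nth 0 gs 0) (+) odd (nth 0 gs 1)) (drop 2 gs)).
Definition cap (g : nat) : nat := if g < 4 then g else 4 + odd g.
Fixpoint allg (k : nat) : seq (seq nat) :=
  if k is k'.+1 then [seq g :: l | g <- iota 1 5, l <- allg k'] else [:: [::]].

Lemma check_all : all (fun gs => tripL false gs && tripL true gs) (allg 6).
Proof. by vm_compute. Qed.

Lemma mem_sumn (l : seq nat) x : x \in l -> x <= sumn l.
Proof. elim: l => //= y l IH; rewrite inE => /orP [/eqP ->|/IH]; lia. Qed.

Lemma Rg_cap b (l : seq nat) : {in l, forall g, 0 < g} -> Rg b (sumn (map cap l)) = Rg b (sumn l).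
Proof.
move=> hpos; case: (boolP (all (fun g => g < 4) l)) => h.
  congr (Rg b (sumn _)); apply: map_id_in => g hg; rewrite /cap.
  by have := allP h g hg => /= ->.
have [g hg hg4] : exists2 g, g \in l & 4 <= g.
  by move: h; rewrite -has_predC => /hasP [g hg /=]; rewrite -leqNgt; exists g.
have h1 := mem_sumn hg.
have h2 : 4 <= sumn (map cap l).
  have hc : cap g \in map cap l by apply: map_f.
  have := mem_sumn hc; rewrite /cap ltnNge hg4 /=; lia.
rewrite /Rg; congr (b && _).
have -> : (sumn (map cap l) == 1) = false by apply/eqP; lia.
have -> : (sumn (map cap l) == 3) = false by apply/eqP; lia.
have -> : (sumn l == 1) = false by apply/eqP; lia.
have -> : (sumn l == 3) = false by apply/eqP; lia.
by [].
Qed.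

Lemma letterG_cap b gs : {in gs, forall g, 0 < g} -> letterG b (map cap gs) = letterG b gs.
Proof.
move=> h; rewrite /letterG -!map_take !Rg_cap // => g /mem_take; exact: h.
Qed.

Lemma odd_cap g : odd (cap g) = odd g.
Proof. rewrite /cap; case: ltnP => // _; rewrite oddD /=; by case: (odd g). Qed.

Lemma odd_nth_cap gs i : odd (nth 0 (map cap gs) i) = odd (nth 0 gs i).
Proof.
case: (ltnP i (size gs)) => h; first by rewrite (nth_map 0) // odd_cap.
by rewrite !nth_default ?size_map.
Qed.

Lemma tripL_cap b gs : {in gs, forall g, 0 < g} -> tripL b (map cap gs) = tripL b gs.
Proof.
move=> h; rewrite /tripL -!map_drop !letterG_cap ?odd_nth_cap //.
  by move=> g /mem_drop; apply: h.
by move=> g /mem_drop; apply: h.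
Qed.

Lemma mem_allg k (l : seq nat) : size l = k -> {in l, forall g, g \in iota 1 5} -> l \in allg k.
Proof.
elim: k l => [|k IH] [|g l] // hs hl.
have {}hs : size l = k by case: hs.
apply: (@allpairs_f _ _ _ (fun g l => g :: l)); first by apply: hl; rewrite inE eqxx.
by apply: IH => // x hx; apply: hl; rewrite inE hx orbT.
Qed.

Lemma tripL_all b gs : size gs = 6 -> {in gs, forall g, 0 < g} -> tripL b gs.
Proof.
move=> hs hp; rewrite -tripL_cap //.
have hm : map cap gs \in allg 6.
  apply: mem_allg; first by rewrite size_map.
  move=> g /mapP [g' hg' ->]; have := hp g' hg'; rewrite mem_iota /cap.
  case: (ltnP g' 4) => h1 h2; first lia.
  by case: (odd g').
have := allP check_all _ hm => /andP [h1 h2]; by case: b.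
Qed.

Definition codeR (x0 x1 x2 x3 x4 : nat) : nat :=
  Rrel x0 x1 + 2 * Rrel x0 x2 + 4 * Rrel x0 x3 + 8 * Rrel x0 x4.

Lemma R_Rg x y : x < y -> Rrel x y = Rg (odd x) (y - x).
Proof.
move=> h; rewrite /Rrel /Rg; congr (_ && _).
apply/idP/idP => /orP [/eqP e|/eqP e]; apply/orP; (left + right); apply/eqP; lia.
Qed.

Lemma subn_chain i j k : i <= j -> j <= k -> j - i + (k - j) = k - i.
Proof. lia. Qed.

Lemma trip_points x0 x1 x2 x3 x4 x5 x6 :
  x0 < x1 -> x1 < x2 -> x2 < x3 -> x3 < x4 -> x4 < x5 -> x5 < x6 ->
  trip3 (codeR x0 x1 x2 x3 x4) (codeR x1 x2 x3 x4 x5) (codeR x2 x3 x4 x5 x6).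
Proof.
move=> h1 h2 h3 h4 h5 h6.
have := @tripL_all (odd x0) [:: x1 - x0; x2 - x1; x3 - x2; x4 - x3; x5 - x4; x6 - x5] erefl.
have hp : {in [:: x1 - x0; x2 - x1; x3 - x2; x4 - x3; x5 - x4; x6 - x5], forall g, 0 < g}.
  by apply/allP; rewrite /= !subn_gt0 h1 h2 h3 h4 h5 h6.
move/(_ hp); rewrite /tripL /letterG /=.
rewrite /codeR !R_Rg; try lia.
have l01 : x0 <= x1 by lia.
have l02 : x0 <= x2 by lia.
have l03 : x0 <= x3 by lia.
have l04 : x0 <= x4 by lia.
have l05 : x0 <= x5 by lia.
have l06 : x0 <= x6 by lia.
have l12 : x1 <= x2 by lia.
have l13 : x1 <= x3 by lia.
have l14 : x1 <= x4 by lia.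
have l15 : x1 <= x5 by lia.
have l16 : x1 <= x6 by lia.
have l23 : x2 <= x3 by lia.
have l24 : x2 <= x4 by lia.
have l25 : x2 <= x5 by lia.
have l26 : x2 <= x6 by lia.
have l34 : x3 <= x4 by lia.
have l35 : x3 <= x5 by lia.
have l36 : x3 <= x6 by lia.
have l45 : x4 <= x5 by lia.
have l46 : x4 <= x6 by lia.
have l56 : x5 <= x6 by lia.
have e1 : odd x0 (+) odd (x1 - x0) = odd x1 by rewrite -oddD subnKC.
have e2 : odd x1 (+) odd (x2 - x1) = odd x2 by rewrite -oddD subnKC.
rewrite e1 e2 !addn0 !subn_chain //.
Qed.


Lemma card_ltord n m : m <= n -> #|[set v : 'I_n | v < m]| = m.
Proof.
move=> hm.
have -> : [set v : 'I_n | v < m] = [set widen_ord hm x | x in [set: 'I_m]].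
  apply/setP => v; rewrite inE; apply/idP/imsetP => [h|[x _ ->]]; last by case: x.
  by exists (Ordinal h) => //; apply: val_inj.
have wi : injective (widen_ord hm) by move=> x1 y1 /(congr1 val) /= /val_inj.
by rewrite card_imset // cardsT card_ord.
Qed.

Lemma perm_rank n (s : 'S_n) (i : 'I_n) : val (s i) = #|[set j | s j < s i]|.
Proof.
rewrite -(card_imset _ (@perm_inj _ s)).
have -> : [set s x | x in [set j | s j < s i]] = [set v : 'I_n | v < s i].
  apply/setP => v; rewrite inE; apply/imsetP/idP => [[x]|h].
    by rewrite inE => h ->.
  by exists ((s^-1)%g v); rewrite ?inE permKV.
by rewrite card_ltord // ltnW.
Qed.

Definition invb n (s : 'S_n) (a b : nat) : bool := (b < n) && (sv s b < sv s a).
Definition code n (s : 'S_n) (a : nat) : nat :=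
  invb s a a.+1 + 2 * invb s a (a + 2) + 4 * invb s a (a + 3) + 8 * invb s a (a + 4).
Definition enc n (s : 'S_n) : seq nat := map (code s) (iota 0 n).
Definition farfree n (s : 'S_n) : Prop :=
  forall a b, a < b -> b < n -> sv s b < sv s a -> b <= a + 4.

Lemma bits4 (a b c d a' b' c' d' : bool) :
  a + 2 * b + 4 * c + 8 * d = a' + 2 * b' + 4 * c' + 8 * d' -> [/\ a = a', b = b', c = c' & d = d'].
Proof. by case: a; case: b; case: c; case: d; case: a'; case: b'; case: c'; case: d'. Qed.

Lemma code_lt n (s : 'S_n) a : code s a < 16.
Proof. rewrite /code; case: (invb s a a.+1); case: (invb s a (a+2)); case: (invb s a (a+3)); by case: (invb s a (a+4)). Qed.

Lemma enc_inj n (s1 s2 : 'S_n) : farfree s1 -> farfree s2 -> enc s1 = enc s2 -> s1 = s2.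
Proof.
move=> f1 f2 he.
have hc : forall a, a < n -> code s1 a = code s2 a.
  move=> a ha; have := congr1 (fun l => nth 0 l a) he.
  by rewrite /enc !(nth_map 0) ?size_iota // nth_iota.
have hinv : forall a b, a < b -> b < n -> (sv s1 b < sv s1 a) = (sv s2 b < sv s2 a).
  move=> a b hab hb; case: (leqP b (a + 4)) => hb4.
    have ha : a < n by lia.
    have [c1 c2 c3 c4] := bits4 (hc a ha).
    have : b = a.+1 \/ b = a + 2 \/ b = a + 3 \/ b = a + 4 by lia.
    rewrite /invb in c1 c2 c3 c4.
    by case=> [e|[e|[e|e]]]; subst b; [move: c1|move: c2|move: c3|move: c4]; rewrite hb /= => ->.
  apply/idP/idP => h.
    by have := f1 _ _ hab hb h; lia.
  by have := f2 _ _ hab hb h; lia.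
apply/permP => i; apply/val_inj; rewrite /= (perm_rank s1 i) (perm_rank s2 i).
apply: eq_card => j; rewrite !inE.
have hi := ltn_ord i; have hj := ltn_ord j.
case: (ltngtP (val j) (val i)) => h.
- have e1 := hinv _ _ h hi; rewrite !svE in e1.
  have n1 : (s1 j : nat) != s1 i by apply/eqP => /val_inj /perm_inj e; move: h; rewrite e ltnn.
  have n2 : (s2 j : nat) != s2 i by apply/eqP => /val_inj /perm_inj e; move: h; rewrite e ltnn.
  by rewrite !ltn_neqAle n1 n2 /= (leqNgt (s1 j)) (leqNgt (s2 j)) e1.
- by have := hinv _ _ h hj; rewrite !svE => ->.
- have -> : j = i by apply: val_inj.
  by rewrite !ltnn.
Qed.


Lemma pat_props k (p : 'S_k) t : contains p (u t) -> exists F : nat -> nat,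
 [/\ forall a b, a < b -> b < k -> F a < F b,
     forall a, a < k -> F a < Lt t &
     forall a b, a < k -> b < k -> (sv p a < sv p b) = (gv (Mt t) (F a) < gv (Mt t) (F b))].
Proof.
case/emb_nat => F [Hi Hr Ho]; exists F; split => // a b ha hb.
by rewrite Ho // u_nat //; apply: Hr.
Qed.

Lemma F_gap (F : nat -> nat) k : (forall a b, a < b -> b < k -> F a < F b) ->
  forall a b, a <= b -> b < k -> F a + (b - a) <= F b.
Proof.
move=> Hi a; elim=> [|b IH] hab hb; first by move: hab; rewrite leqn0 => /eqP ->; rewrite subnn addn0.
case: (ltngtP a b.+1) => h; last by subst; lia.
  have := IH ltac:(lia) ltac:(lia); have := Hi b b.+1 (ltnSn b) hb; lia.
lia.
Qed.

Lemma pat_farfree k (p : 'S_k) t : contains p (u t) -> farfree p.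
Proof.
case/pat_props => F [Hi Hr Ho] a b hab hb h.
have ha : a < k by lia.
have h' : gv (Mt t) (F b) < gv (Mt t) (F a) by rewrite -Ho.
have hFab := Hi a b hab hb.
have := gv_far (_ : 5 <= Mt t) hFab (_ : F b <= (Mt t).+1) h'.
have := Hr b hb; have := F_gap Hi (ltnW hab) hb; rewrite /Lt /Mt; lia.
Qed.

Lemma pat_code k (p : 'S_k) t F :
  (forall a b, a < b -> b < k -> F a < F b) ->
  (forall a, a < k -> F a < Lt t) ->
  (forall a b, a < k -> b < k -> (sv p a < sv p b) = (gv (Mt t) (F a) < gv (Mt t) (F b))) ->
  forall a, 1 <= a -> a + 6 <= k ->
  code p a = codeR (F a) (F a.+1) (F (a + 2)) (F (a + 3)) (F (a + 4)).
Proof.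
move=> Hi Hr Ho a h1 h6.
have hk1 := Hr k.-1 ltac:(lia).
have hb : forall b, a < b -> b <= a + 4 -> invb p a b = Rrel (F a) (F b).
  move=> b hab hb4; rewrite /invb (_ : b < k) /=; last by lia.
  rewrite Ho; try lia.
  apply: gv_mid.
  - have := Hi 0 a ltac:(lia) ltac:(lia); lia.
  - by apply: Hi; lia.
  - have := Hi b k.-1 ltac:(lia) ltac:(lia); rewrite /Lt in hk1; lia.
by rewrite /code /codeR !hb; try lia.
Qed.

Lemma pat_trip k (p : 'S_k) t F :
  (forall a b, a < b -> b < k -> F a < F b) ->
  (forall a, a < k -> F a < Lt t) ->
  (forall a b, a < k -> b < k -> (sv p a < sv p b) = (gv (Mt t) (F a) < gv (Mt t) (F b))) ->
  forall a, 1 <= a -> a + 8 <= k -> trip3 (code p a) (code p a.+1) (code p a.+2).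
Proof.
move=> Hi Hr Ho a h1 h8.
rewrite (pat_code Hi Hr Ho (a := a)); try lia.
rewrite (pat_code Hi Hr Ho (a := a.+1)); try lia.
rewrite (pat_code Hi Hr Ho (a := a.+2)); try lia.
have -> : a.+2 + 2 = a + 4 by lia.
have -> : a.+2 + 3 = a + 5 by lia.
have -> : a.+2 + 4 = a + 6 by lia.
have -> : a.+1 + 2 = a + 3 by lia.
have -> : a.+1 + 3 = a + 4 by lia.
have -> : a.+1 + 4 = a + 5 by lia.
have -> : a.+3 = a + 3 by lia.
have -> : a.+2 = a + 2 by lia.
apply: trip_points; apply: Hi; lia.
Qed.


Definition alph : seq nat := [:: 0; 1; 2; 3; 5].
Definition okf (c : nat) (w : seq nat) : bool :=
  if w is a :: b :: _ then trip3 c a b else true.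
Fixpoint Lw (m : nat) : seq (seq nat) :=
  if m is m'.+1 then flatten [seq [seq c :: w | c <- alph & okf c w] | w <- Lw m']
  else [:: [::]].

Definition W (a b : nat) : nat :=
  match a, b with
  | 0, 0 => 51 | 0, 1 => 51 | 0, 2 => 37 | 0, 3 => 51 | 0, 5 => 51
  | 1, 0 => 31 | 2, 1 => 17 | 2, 3 => 17 | 2, 5 => 17 | 3, 0 => 31 | 5, 0 => 31
  | _, _ => 0 end.
Definition Wt (w : seq nat) : nat := if w is a :: b :: _ then W a b else 0.
Definition sumW (l : seq (seq nat)) : nat := \sum_(w <- l) Wt w.

Lemma W_check : all (fun a => all (fun b =>
   4 * sumn [seq W c a | c <- alph & trip3 c a b] <= 9 * W a b) alph) alph.
Proof. by vm_compute. Qed.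

Lemma trip_check : all (fun c => all (fun a => all (fun b =>
   trip3 c a b ==> (17 <= W c a)) alph) alph) alph.
Proof. by vm_compute. Qed.

Lemma trip_alph c a b : trip3 c a b -> [/\ c \in alph, a \in alph & b \in alph].
Proof.
have h : all (fun x => [&& x.1.1 \in alph, x.1.2 \in alph & x.2 \in alph]) tripS by vm_compute.
by move=> ht; have /and3P [] := allP h _ ht.
Qed.

Lemma Lw_S m : Lw m.+1 = flatten [seq [seq c :: w | c <- alph & okf c w] | w <- Lw m].
Proof. by []. Qed.

Lemma Lw_mem m w : w \in Lw m -> size w = m /\ all (fun x => x \in alph) w.
Proof.
elim: m w => [|m IH] w; first by rewrite inE => /eqP ->.
rewrite Lw_S; case/flatten_mapP => w' hw' /mapP [c]; rewrite mem_filter => /andP [_ hc] ->.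
by have [<- ha] := IH _ hw'; rewrite /= hc ha.
Qed.

Lemma Lw_head m w : w \in Lw m.+3 -> exists c a b r, w = [:: c, a, b & r] /\ trip3 c a b.
Proof.
rewrite Lw_S; case/flatten_mapP => w' hw' /mapP [c]; rewrite mem_filter => /andP [hok _] ->.
have [hs _] := Lw_mem hw'.
move: hs hok; case: w' {hw'} => [|a [|b r]] //= _ h.
by exists c, a, b, r.
Qed.

Lemma Lw_complete w : all (fun x => x \in alph) w ->
  (forall i, i + 2 < size w -> trip3 (nth 0 w i) (nth 0 w i.+1) (nth 0 w i.+2)) ->
  w \in Lw (size w).
Proof.
elim: w => [|c w IH] // /andP [hc ha] ht.
have hw : w \in Lw (size w).
  apply: IH => // i hi; have := ht i.+1; rewrite /=; apply; rewrite addSn ltnS; exact: hi.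
rewrite Lw_S; apply/flatten_mapP; exists w => //.
apply/mapP; exists c => //; rewrite mem_filter hc andbT.
case: w {IH ha hw} ht => [|a [|b r]] //= ht.
by have := ht 0 isT.
Qed.

Lemma sumW_sumn l : sumW l = sumn (map Wt l).
Proof. by rewrite /sumW sumnE big_map. Qed.

Lemma sumW_step m : 4 * sumW (Lw m.+3) <= 9 * sumW (Lw m.+2).
Proof.
rewrite {1}/sumW Lw_S big_flatten big_map /sumW !big_distrr.
rewrite big_seq_cond [X in _ <= X]big_seq_cond; apply: leq_sum => w /andP [hw _].
have [hs ha] := Lw_mem hw.
case: w hw hs ha => [|a [|b r]] // hw _ /and3P [haa hbb _].
rewrite big_map big_filter.
have := allP W_check a haa => /allP /(_ b hbb).
rewrite sumnE big_map big_filter.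
have -> : \sum_(c <- alph | okf c [:: a, b & r]) Wt [:: c, a, b & r] =
          \sum_(c <- alph | trip3 c a b) W c a by [].
by [].
Qed.

Lemma sumW_L2 : sumW (Lw 2) = 385.
Proof. by rewrite sumW_sumn; vm_compute. Qed.

Lemma sumW_bound m : 4 ^ m * sumW (Lw m.+2) <= 385 * 9 ^ m.
Proof.
elim: m => [|m IH]; first by rewrite sumW_L2.
have := sumW_step m; rewrite !expnS.
move: IH; set a := 4 ^ m; set b := 9 ^ m; set s2 := sumW _; set s3 := sumW _ => h1 h2.
nia.
Qed.

Lemma size_Lw m : 17 * size (Lw m.+3) <= sumW (Lw m.+3).
Proof.
rewrite -sum1_size big_distrr /sumW big_seq [X in _ <= X]big_seq.
apply: leq_sum => w hw; have [c [a [b [r [-> ht]]]]] := Lw_head hw.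
have [hc ha hb] := trip_alph ht.
have := allP trip_check c hc => /allP /(_ a ha) /allP /(_ b hb).
by rewrite ht /= muln1.
Qed.

Lemma Lw_bound m : 17 * 4 ^ m.+1 * size (Lw m.+3) <= 385 * 9 ^ m.+1.
Proof.
have h1 := sumW_bound m.+1; have h2 := size_Lw m.
move: h1 h2; set a := 4 ^ m.+1; set s := sumW _; set z := size _ => h1 h2.
nia.
Qed.


Fixpoint words (A : seq nat) (k : nat) : seq (seq nat) :=
  if k is k'.+1 then [seq c :: w | c <- A, w <- words A k'] else [:: [::]].

Lemma size_words A k : size (words A k) = size A ^ k.
Proof. by elim: k => //= k IH; rewrite size_allpairs IH expnS. Qed.

Lemma mem_words A k (l : seq nat) : size l = k -> {in l, forall g, g \in A} -> l \in words A k.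
Proof.
elim: k l => [|k IH] [|g l] // hs hl.
have {}hs : size l = k by case: hs.
apply: (@allpairs_f _ _ _ (fun g l => g :: l)); first by apply: hl; rewrite inE eqxx.
by apply: IH => // x hx; apply: hl; rewrite inE hx orbT.
Qed.

Definition G (n : nat) : seq (seq nat) :=
  if n < 9 then words (iota 0 16) n
  else [seq c :: v | c <- iota 0 16, v <- [seq m ++ t | m <- Lw (n - 6), t <- words (iota 0 16) 5]].

Lemma size_G n : size (G n) = if n < 9 then 16 ^ n else 16 * (size (Lw (n - 6)) * 16 ^ 5).
Proof. by rewrite /G; case: ifP => _; rewrite ?size_words ?size_allpairs ?size_words size_iota. Qed.

Lemma code_in k (p : 'S_k) a : code p a \in iota 0 16.
Proof. by rewrite mem_iota code_lt. Qed.

Lemma enc_in_G k (p : 'S_k) t : contains p (u t) -> enc p \in G k.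
Proof.
move=> hc; rewrite /G; case: ifP => hk.
  apply: mem_words; first by rewrite size_map size_iota.
  by move=> x /mapP [a _ ->]; apply: code_in.
move/negbT: hk; rewrite -leqNgt => hk.
have [F [Hi Hr Ho]] := pat_props hc.
have hcode := pat_code Hi Hr Ho.
have ek : iota 0 k = 0 :: (iota 1 (k - 6) ++ iota (k - 5) 5).
  have e : k = 1 + ((k - 6) + 5) by lia.
  rewrite {1}e iotaD iotaD add0n.
  have -> : 1 + (k - 6) = k - 5 by lia.
  by [].
rewrite /enc ek map_cons map_cat.
apply: (@allpairs_f _ _ _ (fun c v => c :: v)); first exact: code_in.
apply: (@allpairs_f _ _ _ (fun m t => m ++ t)); last first.
  apply: mem_words; first by rewrite size_map size_iota.
  by move=> x /mapP [a _ ->]; apply: code_in.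
have htr : forall a, 1 <= a -> a + 8 <= k -> trip3 (code p a) (code p a.+1) (code p a.+2).
  exact: pat_trip Hi Hr Ho.
rewrite -[X in Lw X](size_iota 1 (k - 6)) -(size_map (code p)).
apply: Lw_complete.
  apply/allP => x /mapP [a]; rewrite mem_iota => ha ->.
  case: (leqP (a + 8) k) => h8.
    by have [] := trip_alph (htr a ltac:(lia) h8).
  case: (boolP (a + 7 == k)) => /eqP h7.
    have := htr (a - 1) ltac:(lia) ltac:(lia).
    by rewrite (_ : (a - 1).+1 = a) //; [case/trip_alph | lia].
  have := htr (a - 2) ltac:(lia) ltac:(lia).
  by rewrite (_ : (a - 2).+2 = a) //; [case/trip_alph | lia].
move=> i; rewrite size_map size_iota => hi.
rewrite !(nth_map 0) ?size_iota; try lia.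
rewrite !nth_iota; try lia.
have -> : 1 + i.+1 = (1 + i).+1 by lia.
have -> : 1 + i.+2 = (1 + i).+2 by lia.
apply: htr; lia.
Qed.


Lemma card_list (T : finType) (S : {set T}) (f : T -> seq nat) (Gl : seq (seq nat)) :
  {in S &, injective f} -> (forall x, x \in S -> f x \in Gl) -> #|S| <= size Gl.
Proof.
move=> hi hG; rewrite cardE -(size_map f).
apply: uniq_leq_size.
  rewrite map_inj_in_uniq ?enum_uniq // => x y; rewrite !mem_enum; exact: hi.
by move=> y /mapP [x]; rewrite mem_enum => hx ->; apply: hG.
Qed.

Definition DS n : {set 'S_n} := [set s : 'S_n | `[< exists t, contains s (u t) >]].

Lemma DS_bound n : #|DS n| <= size (G n).
Proof.
apply: (@card_list _ _ (@enc n)).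
  move=> x y; rewrite !inE => /asboolP [t1 h1] /asboolP [t2 h2]; apply: enc_inj.
    exact: pat_farfree h1.
  exact: pat_farfree h2.
by move=> x; rewrite inE => /asboolP [t h]; apply: enc_in_G h.
Qed.

Definition Kc : nat := 16 ^ 8 * 4 ^ 8 * 385.

Lemma DS_nat n : 17 * (#|DS n| * 4 ^ n) <= 17 * (Kc * 9 ^ n).
Proof.
have h := DS_bound n; rewrite size_G in h.
rewrite leq_pmul2l // /Kc.
case: ltnP h => hn h.
  have a1 : 16 ^ n <= 16 ^ 8 by rewrite leq_pexp2l //; lia.
  have a2 : 4 ^ n <= 4 ^ 8 by rewrite leq_pexp2l //; lia.
  have a3 : 0 < 9 ^ n by rewrite expn_gt0.
  apply: leq_trans (leq_mul (leq_trans h a1) a2) _.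
  move: (16 ^ 8) (4 ^ 8) => X Y.
  rewrite -mulnA; apply: leq_pmulr; rewrite muln_gt0 a3 andbT; exact: isT.
have [m em] : exists m, n = m + 9 by exists (n - 9); lia.
subst n.
have hb := Lw_bound m.
rewrite (_ : m + 9 - 6 = m.+3) in h; last by lia.
have e4 : 4 ^ (m + 9) = 4 ^ m.+1 * 4 ^ 8 by rewrite -expnD; congr (_ ^ _); lia.
have e9 : 9 ^ (m + 9) = 9 ^ m.+1 * 9 ^ 8 by rewrite -expnD; congr (_ ^ _); lia.
have e16 : forall x, x ^ 8 = x * x ^ 5 * x ^ 2 by move=> x; rewrite -!expnS -expnD.
rewrite e4 e9 (e16 16).
have hQ : 0 < 16 ^ 2 by rewrite expn_gt0.
have hS : 0 < 9 ^ 8 by rewrite expn_gt0.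
move: h hb hQ hS; move: (#|DS (m + 9)|) (size (Lw m.+3)) (4 ^ m.+1) (9 ^ m.+1) => d z A B.
move: (16 ^ 5) (16 ^ 2) (4 ^ 8) (9 ^ 8) => P Q Rrel S h hb hQ hS.
have h1 : d * A <= 16 * P * (z * A) by nia.
have h2 : z * A <= 385 * B by nia.
have h3 : d * A <= 16 * P * (385 * B) by nia.
have h4 : d * (A * Rrel) <= 16 * P * (385 * B) * Rrel by nia.
have h5 : 1 <= Q * S by nia.
nia.
Qed.


Lemma antichain t t' : contains (u t) (u t') -> t = t'.
Proof.
case/emb_nat => F [Hi Hr Ho].
suff : Mt t = Mt t' by rewrite /Mt; lia.
apply: (@anti_nat _ _ F).
- by rewrite /Mt; lia.
- by rewrite /Mt; lia.
- by rewrite /Mt oddD oddM.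
- by rewrite /Mt oddD oddM.
- by move=> a b hab hb; apply: Hi => //; rewrite /Lt.
- by move=> a ha; have := Hr a ha; rewrite /Lt.
- move=> a b ha hb.
  have ha' : a < Lt t by rewrite /Lt.
  have hb' : b < Lt t by rewrite /Lt.
  have hFa := Hr a ha'; have hFb := Hr b hb'.
  by rewrite -(u_nat ha' hb') -(u_nat hFa hFb) Ho.
Qed.



Local Open Scope ring_scope.

Lemma bern (R : realFieldType) (x : R) (n : nat) : 0 <= x -> 1 + n%:R * x <= (1 + x) ^+ n.
Proof.
move=> hx; elim: n => [|n IH]; first by rewrite mul0r addr0 expr0.
rewrite exprS -addn1 natrD.
have h1 : 0 <= (n%:R : R) := ler0n _ _.
move: IH; set y := (1 + x) ^+ n => IH.
nra.
Qed.

Lemma P_neg (R : realFieldType) (x : R) : x <= 9 / 4 ->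
  x ^+ 5 - x ^+ 4 - 2 * x ^+ 3 - 2 * x ^+ 2 - x - 1 < 0.
Proof.
move=> hx.
case: (ltrP x 0) => h0.
  have [y hy ->] : exists2 y : R, 0 < y & x = - y by exists (- x); rewrite ?opprK ?oppr_gt0.
  have -> : (- y) ^+ 5 - (- y) ^+ 4 - 2 * (- y) ^+ 3 - 2 * (- y) ^+ 2 - - y - 1 =
            - y ^+ 5 - y ^+ 4 + 2 * y ^+ 3 - 2 * y ^+ 2 + y - 1 by ring.
  have e3 : y ^+ 3 = y * y ^+ 2 by rewrite exprS.
  have e4 : y ^+ 4 = y * y ^+ 3 by rewrite exprS.
  have e5 : y ^+ 5 = y * y ^+ 4 by rewrite exprS.
  have e2 : y ^+ 2 = y * y by rewrite expr2.
  have p2 : 0 <= y ^+ 2 by rewrite exprn_ge0 // ltW.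
  have p3 : 0 <= y ^+ 3 by rewrite exprn_ge0 // ltW.
  have p4 : 0 <= y ^+ 4 by rewrite exprn_ge0 // ltW.
  have p5 : 0 < y ^+ 5 by rewrite exprn_gt0.
  case: (lerP y 1) => h1.
    have : y ^+ 3 <= y ^+ 2 by rewrite e3; nra.
    lra.
  have : y ^+ 3 <= y ^+ 4 by rewrite e4; nra.
  have : y ^+ 3 <= y ^+ 5 by rewrite e5; nra.
  have : y <= y ^+ 2 by rewrite e2; nra.
  lra.
have -> : x ^+ 5 - x ^+ 4 - 2 * x ^+ 3 - 2 * x ^+ 2 - x - 1 =
          x ^+ 3 * ((x - 2) * (x + 1)) - 2 * x ^+ 2 - x - 1 by ring.
have x2 : x ^+ 2 = x * x by rewrite expr2.
have x3 : x ^+ 3 = x * x ^+ 2 by rewrite exprS.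
have p2 : 0 <= x ^+ 2 by rewrite exprn_ge0.
have p3 : 0 <= x ^+ 3 by rewrite exprn_ge0.
case: (lerP x 2) => h2.
  have : x ^+ 3 * ((x - 2) * (x + 1)) <= 0 by apply: mulr_ge0_le0 => //; nra.
  lra.
have hq : (x - 2) * (x + 1) <= 13 / 16 by nra.
have hq0 : 0 <= (x - 2) * (x + 1) by nra.
have h2' : x ^+ 2 <= 81 / 16 by rewrite x2; nra.
have h3 : x ^+ 3 <= 729 / 64 by rewrite x3; nra.
have : x ^+ 3 * ((x - 2) * (x + 1)) <= 729 / 64 * (13 / 16) by apply: ler_pM.
have : 4 <= x ^+ 2 by rewrite x2; nra.
lra.
Qed.

Lemma eventually_lt (R : realType) (a : R) (K : nat) : 9 / 4 < a ->
  exists n0 : nat, forall n : nat, (n0 < n)%N -> K%:R * 9 ^+ n < (4 * a) ^+ n.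
Proof.
move=> ha.
set d := 4 * a / 9 - 1.
have hd : 0 < d by rewrite /d; lra.
exists (Num.bound (K%:R / d)) => n hn.
have h0 : K%:R / d < (Num.bound (K%:R / d))%:R.
  by apply: archi_boundP; rewrite divr_ge0 // ltW.
have h1 : K%:R / d < n%:R.
  by apply: (lt_le_trans h0); rewrite ler_nat ltnW.
have h2 : K%:R < n%:R * d.
  have e : K%:R = K%:R / d * d by rewrite divfK // gt_eqF.
  by rewrite [X in X < _]e ltr_pM2r.
have h3 := bern n (ltW hd).
have e : 4 * a = (1 + d) * 9 by rewrite /d; field.
rewrite e exprMn ltr_pM2r ?exprn_gt0 //.
lra.
Qed.

Lemma r_gt (R : realType) (r : R) :
  r ^+ 5 - r ^+ 4 - 2 * r ^+ 3 - 2 * r ^+ 2 - r - 1 = 0 -> 9 / 4 < r.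
Proof.
move=> hr; case: (ltrP (9 / 4) r) => // h.
by have := P_neg h; rewrite hr ltxx.
Qed.

Unset Implicit Arguments. Set Strict Implicit.

Theorem mainTheorem11 (R : realType) (r : R)
  (hr : r ^+ 5 - r ^+ 4 - 2 * r ^+ 3 - 2 * r ^+ 2 - r - 1 = 0)
  (hr_unique : forall y : R,
     y ^+ 5 - y ^+ 4 - 2 * y ^+ 3 - 2 * y ^+ 2 - y - 1 = 0 -> y = r) :
  forall eps : R, 0 < eps -> uncountable_family (K_class (r + eps)).
Proof.
move=> eps heps [e he].
pose A t := ~~ e t (existT _ (Lt t) (u t)).
pose X : PermSet := fun P => `[< exists t, A t /\ contains (projT2 P) (u t) >].
have KX : K_class (r + eps) X.
  split.
    move=> k n p s hps /asboolP [t [hA hs]]; apply/asboolP; exists t; split => //.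
    exact: contains_trans hps hs.
  have ha : 9 / 4 < r + eps by have := r_gt hr; lra.
  have [n0 hn0] := eventually_lt Kc ha.
  exists n0 => n hn.
  have hle : (level_count X n <= #|DS n|)%N.
    apply: subset_leq_card; apply/subsetP => s; rewrite !inE => /asboolP [t [_ h]].
    by apply/asboolP; exists t.
  have hnat := DS_nat n.
  rewrite leq_pmul2l // in hnat.
  have hR : (#|DS n|%:R : R) * 4 ^+ n <= Kc%:R * 9 ^+ n.
    by rewrite -!natrX -!natrM ler_nat.
  have h1 := hn0 n hn; rewrite exprMn in h1.
  have h2 : (#|DS n|%:R : R) * 4 ^+ n < (r + eps) ^+ n * 4 ^+ n.
    by rewrite (mulrC (_ ^+ n)); apply: (le_lt_trans hR h1).
  rewrite ltr_pM2r ?exprn_gt0 // in h2.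
  apply: le_lt_trans h2; by rewrite ler_nat.
have [m hm] := he X KX.
have hX : X (existT _ (Lt m) (u m)) = A m.
  apply/asboolP/idP => [[t [hA hc]]|hA].
    by have := antichain hc => ->.
  by exists m; split => //; exact: contains_refl.
move: hX; rewrite /A hm.
by case: (X _).
Qed.
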